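(* Let $D\ge 2$, $\eta=\mathrm{diag}(-1,1,\dots,1)$, and let $g_{\mu\nu}$, $f_{\mu\nu}$ be real symmetric invertible $D\times D$ matrices of Lorentzian signature $(-,+,\dots,+)$, with inverses $g^{\mu\nu}$, $f^{\mu\nu}$. If the matrix $g^{-1}f$ has no (real) negative eigenvalues, then there exist real matrices $e_A{}^\mu$ and $L^B{}_\nu$ with $\eta^{AB}e_A{}^\mu e_B{}^\nu=g^{\mu\nu}$ and $\eta_{AB}L^A{}_\mu L^B{}_\nu=f_{\mu\nu}$ such that $e_A{}^\mu L_{B\mu}=e_B{}^\mu L_{A\mu}$ for all $A,B$.
   Context: Greek indices are space-time indices and capital Latin indices are Lorentz indices, lowered and raised with $\eta_{AB}$ and $\eta^{AB}$ (so $L_{B\mu}=\eta_{BC}L^C{}_\mu$); repeated indices are summed. *)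

(* Defs.v *)
From HB Require Import structures.
From mathcomp Require Import all_boot all_order all_algebra.
From mathcomp Require Export reals.
Set Implicit Arguments. Unset Strict Implicit. Unset Printing Implicit Defensive.
Import Order.TTheory GRing.Theory Num.Theory.
Local Open Scope ring_scope.

(* Minkowski metric eta = diag(-1, 1, ..., 1) on indices 'I_D; the index 0
   is the time direction. eta is its own inverse, so eta^{AB} = eta_{AB}. *)
Definition minkowski (R : pzRingType) (D : nat) : 'M[R]_D :=
  \matrix_(i < D, j < D)
    (if i == j then (if nat_of_ord i == 0%N then -1 else 1) else 0).

(* A real symmetric matrix has Lorentzian signature (-,+,...,+) iff it is
   congruent to eta (Sylvester's law of inertia: signature = inertia). *)
Definition lorentzian (R : realType) (D : nat) (g : 'M[R]_D) : Prop :=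
  exists P : 'M[R]_D, P \in unitmx /\ P^T *m g *m P = minkowski R D.

(* Main.v *)
Require Import Defs.
From HB Require Import structures.
From mathcomp Require Import all_boot all_order all_algebra.
From mathcomp Require Import reals.
From mathcomp Require Import complex ring lra.
Import Order.TTheory GRing.Theory Num.Theory.
Local Open Scope ring_scope.

Section P.
Variable R : realType.
Implicit Types p q h r : {poly R}.

Lemma irr_cases h r : irreducible_poly h -> (h %| r) \/ coprimep h r.
Proof.
move=> irr; have [H|H] := irredp_XsubCP irr (dvdp_gcdl h r).
  by right; rewrite -gcdp_eqp1.
by left; rewrite -(eqp_dvdl r H) dvdp_gcdr.
Qed.

Lemma key (x : {poly R}) (al s a b : R) : al^+2*(2*s+2*a) = 1 -> s^+2 = a^+2+b^+2 ->
 (al%:P*x + (s*al)%:P)^+2 - x = (al^+2)%:P * ((x - a%:P)^+2 + (b^+2)%:P).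
Proof.
move=> e1 e2.
have hb : b^+2 = s^+2 - a^+2 by rewrite e2; ring.
rewrite hb -{2}[x]mul1r -polyC1 -e1.
ring.
Qed.

Lemma quad_sqrt (a b : R) : b != 0 ->
  exists p0, ('X - a%:P)^+2 + (b^+2)%:P %| p0^+2 - 'X.
Proof.
move=> b0.
set s := Num.sqrt (a^+2 + b^+2).
have s0 : 0 <= s by apply: sqrtr_ge0.
have s2 : s^+2 = a^+2 + b^+2 by rewrite sqr_sqrtr // addr_ge0 // sqr_ge0.
have b2 : 0 < b^+2 by rewrite exprn_even_gt0.
have x0 : 0 < 2*s + 2*a by nra.
set al := (Num.sqrt (2*s+2*a))^-1.
have e1 : al^+2 * (2*s+2*a) = 1.
  by rewrite /al exprVn sqr_sqrtr ?ltW // mulVf // gt_eqF.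
exists (al%:P*'X + (s*al)%:P); rewrite (@key 'X _ _ _ _ e1 s2).
exact: dvdp_mull.
Qed.


Lemma conj_map (q : {poly R}) :
  map_poly conjc (map_poly (real_complex R) q) = map_poly (real_complex R) q.
Proof.
rewrite -map_poly_comp; apply: eq_map_poly => x /=; exact: conjc_real.
Qed.

Lemma quad_fact (X A B I : {poly R[i]}) : I^+2 = -1 ->
  (X - A)^+2 + B^+2 = (X - (A + I*B)) * (X - (A + I * - B)).
Proof.
move=> hI.
have -> : (X - (A + I*B)) * (X - (A + I * - B)) = (X - A)^+2 - I^+2 * B^+2 by ring.
by rewrite hI; ring.
Qed.

Lemma factor_exists (q : {poly R}) : (1 < size q)%N ->
  (forall t, t <= 0 -> ~~ root q t) ->
  exists h, [/\ irreducible_poly h, h %| q & exists p0, h %| p0^+2 - 'X].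
Proof.
move=> sq noneg.
set qC := map_poly (real_complex R) q.
have : size qC != 1%N by rewrite size_map_poly; case: (size q) sq => [|[]].
case/closed_rootP => z; case: z => a b rz.
have [b0|b0] := eqVneq b 0.
  subst b; rewrite complexr0 fmorph_root in rz.
  have a0 : 0 < a by rewrite ltNge; apply: contraL rz; exact: noneg.
  exists ('X - a%:P); split; first exact: irredp_XsubC.
    by rewrite dvdp_XsubCl.
  exists (Num.sqrt a)%:P.
  by rewrite -rmorphXn /= sqr_sqrtr ?ltW // -[a%:P - _]opprB dvdpNr.
exists (('X - a%:P)^+2 + (b^+2)%:P); split.
- apply: cubic_irreducible.
    by rewrite size_polyDl size_exp_XsubC // size_polyC; case: (_ != 0).
  move=> t; rewrite /root !hornerE /=.
  have : 0 < (t - a)^+2 + b^+2.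
    apply: ltr_wpDl; first exact: sqr_ge0.
    by rewrite exprn_even_gt0.
  by rewrite lt0r => /andP[].
- rewrite -(dvdp_map (real_complex R)) -/qC.
  rewrite rmorphD rmorphXn rmorphB /= map_polyX !map_polyC /= rmorphXn /=.
  rewrite [(_ ^+ 2)%:P]rmorphXn /=.
  rewrite (@quad_fact _ _ _ ('i%C)%:P); last first.
    by rewrite -rmorphXn sqr_i rmorphN.
  rewrite -polyCN -!polyCM -!polyCD.
  have -> : (a%:C + 'i%C * b%:C)%C = (a +i* b)%C by rewrite [RHS]complexE.
  have -> : (a%:C + 'i%C * - b%:C)%C = (a -i* b)%C.
    by rewrite [RHS]complexE /= rmorphN.
  rewrite Gauss_dvdp; last by rewrite coprimep_XsubC2 // eq_complex /= subrr eqxx /= subr_eq0 eq_sym -subr_eq0 opprK -mulr2n mulrn_eq0 negb_or b0.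
  rewrite !dvdp_XsubCl rz /=.
  have -> : (a -i* b)%C = conjc (a +i* b)%C by [].
  by rewrite -complex_root_conj /qC conj_map.
- exact: quad_sqrt.
Qed.



Lemma crt_alg (x p0 p1 A B : {poly R}) : A + B = 1 ->
  (p1*A + p0*B)^+2 - x = (p0^+2 - x) + A * ((p1 - p0)*(p1*A + p0*B + p0)).
Proof.
move=> hAB; have -> : B = 1 - A by rewrite -hAB; ring.
ring.
Qed.

Lemma newton_alg (x p1 u c : {poly R}) :
  (p1 - c * (p1 ^+ 2 - x) * u) ^+ 2 - x = (p1 ^+ 2 - x) * (1 - u * p1)
   + c ^+ 2 * ((p1 ^+ 2 - x) * (p1 ^+ 2 - x)) * u ^+ 2
   + (p1 ^+ 2 - x) * u * p1 * (1 - 2 * c).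
Proof. ring. Qed.

Lemma sqrt_mod (q : {poly R}) : q != 0 -> (forall t, t <= 0 -> ~~ root q t) ->
  exists p, q %| p^+2 - 'X.
Proof.
have [n] := ubnP (size q); elim: n q => // n IH q sqn q0 noneg.
have [sq1|sq1] := leqP (size q) 1%N.
  exists 0; have : size q == 1%N.
    by rewrite eqn_leq sq1 /= size_poly_gt0.
  by rewrite size_poly_eq1 => /eqp_dvdl ->; rewrite dvd1p.
have [h [irr hq [p0 hp0]]] := factor_exists q sq1 noneg.
have h0 : h != 0 by exact: irredp_neq0.
have sh : (1 < size h)%N by case: irr.
set q1 := q %/ h.
have Eq : q = q1 * h by rewrite divpK.
have q10 : q1 != 0 by apply: contraNneq q0 => e; rewrite Eq e mul0r.
have noneg1 : forall t, t <= 0 -> ~~ root q1 t.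
  by move=> t /noneg; apply: contra; rewrite Eq rootM => ->.
have sq1' : (size q1 < n)%N.
  rewrite size_divp //; move: sqn sh sq1; rewrite -ltnS.
  case: (size q) => // m; case: (size h) => // k; rewrite !ltnS => H1 H2 H3.
  rewrite succnK; case: k H2 => // k _; rewrite subSS; exact: leq_ltn_trans (leq_subr _ _) H1.
have [p1 hp1] := IH q1 sq1' q10 noneg1.
have [hq1|cop] := @irr_cases h q1 irr.
- have hr0 : ~~ root h 0.
    apply: contra (noneg 0 (lexx 0)); rewrite Eq rootM => ->; exact: orbT.
  have : coprimep h 'X by rewrite coprimepX.
  case/Bezout_eq1_coprimepP => -[w1 w2] /= hw.
  set e := p1^+2 - 'X.
  set u := w2 * p1.
  exists (p1 - (2^-1)%:P * e * u); rewrite newton_alg -/e.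
  have -> : 1 - 2 * (2^-1 : R)%:P = 0.
    by rewrite -(rmorph_nat (@polyC R)) -polyCM mulfV ?pnatr_eq0 // subrr.
  rewrite mulr0 addr0 Eq.
  have he : h %| e by apply: dvdp_trans hq1 hp1.
  apply: dvdp_add; last first.
    by apply: dvdp_mulr; apply: dvdp_mull; apply: dvdp_mul.
  apply: dvdp_mul => //.
  have -> : 1 - u * p1 = w1 * h - w2 * e.
    by rewrite /u /e -hw; ring.
  by apply: dvdp_sub; [apply: dvdp_mull; exact: dvdpp | exact: dvdp_mull].
- case/Bezout_eq1_coprimepP: (cop) => -[u1 u2] /= hu.
  exists (p1*(u1*h) + p0*(u2*q1)).
  rewrite Eq [q1 * h]mulrC Gauss_dvdp //; apply/andP; split.
    rewrite (crt_alg _ _ _ _ _ hu).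
    by apply: dvdp_add => //; apply: dvdp_mulr; apply: dvdp_mull; exact: dvdpp.
  rewrite [p1 * _ + _]addrC (crt_alg _ _ _ _ _ (etrans (addrC _ _) hu)).
  by apply: dvdp_add => //; apply: dvdp_mulr; apply: dvdp_mull; exact: dvdpp.
Qed.

Lemma sum_form D (N X Y : 'M[R]_D) (mu nu : 'I_D) :
  \sum_(A < D) \sum_(B < D) N A B * X A mu * Y B nu = (X^T *m N *m Y) mu nu.
Proof.
rewrite mxE; under [RHS]eq_bigr do rewrite mxE big_distrl /=.
rewrite exchange_big /=; apply: eq_bigr => A _; apply: eq_bigr => B _.
by rewrite !mxE; ring.
Qed.

Lemma mink_sym D : (minkowski R D)^T = minkowski R D.
Proof. by apply/matrixP => i j; rewrite !mxE eq_sym; case: eqP => // ->. Qed.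

Lemma mink_sq D : minkowski R D *m minkowski R D = 1%:M.
Proof.
apply/matrixP => i j; rewrite !mxE (bigD1 i) //= big1 ?addr0.
  rewrite !mxE eqxx; case: (i =P j) => [->|/eqP nij]; rewrite ?eqxx /=.
    by case: ifP; rewrite ?mulNr ?mul1r ?opprK.
  by rewrite mulr0.
by move=> k /negPf nki; rewrite !mxE eq_sym nki mul0r.
Qed.

Lemma main n (g f : 'M[R]_n.+1) :
  g^T = g -> f^T = f ->
  g \in unitmx -> f \in unitmx ->
  lorentzian g ->
  (forall a : R, a < 0 -> ~~ eigenvalue (invmx g *m f) a) ->
  exists e L : 'M[R]_n.+1,
    [/\ forall mu nu : 'I_n.+1,
          \sum_(A < n.+1) \sum_(B < n.+1) minkowski R n.+1 A B * e A mu * e B nu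
            = invmx g mu nu,
        forall mu nu : 'I_n.+1,
          \sum_(A < n.+1) \sum_(B < n.+1) minkowski R n.+1 A B * L A mu * L B nu
            = f mu nu
      & forall A B : 'I_n.+1,
          \sum_(mu < n.+1) e A mu * (minkowski R n.+1 *m L) B mu
            = \sum_(mu < n.+1) e B mu * (minkowski R n.+1 *m L) A mu].
Proof.
move=> gT fT ug uf [P [uP hP]] hneg.
set eta := minkowski R n.+1.
rewrite -/eta in hP.
set M := invmx g *m f.
have uM : M \in unitmx by rewrite unitmx_mul unitmx_inv ug.
have hMg : M^T *m g = g *m M.
  by rewrite /M trmx_mul trmx_inv gT fT -mulmxA mulVmx // mulmx1 mulmxA mulmxV // mul1mx.
have sym : forall p, (horner_mx M p)^T *m g = g *m horner_mx M p.
  move=> p; elim/poly_ind: p => [|p c IHp]; first by rewrite rmorph0 trmx0 mul0mx mulmx0.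
  rewrite rmorphD rmorphM /= horner_mx_X horner_mx_C -mulmxE.
  rewrite linearD /= trmx_mul tr_scalar_mx mulmxDl mulmxDr -scalar_mxC.
  congr (_ + _); rewrite -mulmxA IHp mulmxA hMg -[LHS]mulmxA; congr (_ *m _).
  exact/esym/(comm_horner_mx p (erefl (M *m M))).
have q0 : char_poly M != 0 by apply: monic_neq0; apply: char_poly_monic.
have noneg : forall t, t <= 0 -> ~~ root (char_poly M) t.
  move=> t; rewrite le_eqVlt => /orP[/eqP ->|/hneg]; last by rewrite eigenvalue_root_char.
  rewrite -eigenvalue_root_char; apply/eigenvalueP => -[v hv v0].
  by move: hv; rewrite scale0r => /(congr1 (mulmx^~ (invmx M))); rewrite mulmxK // mul0mx => /eqP; rewrite (negPf v0).
have [p hp] := sqrt_mod (char_poly M) q0 noneg.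
set S := horner_mx M p.
have S2 : S *m S = M.
  case/dvdpP: hp => k hk.
  have : horner_mx M (p ^+ 2 - 'X) = 0 by rewrite hk rmorphM /= Cayley_Hamilton mulr0.
  by rewrite rmorphB rmorphXn /= horner_mx_X mulmxE => /eqP; rewrite subr_eq0 => /eqP.
set Sig := g *m S.
have SigT : Sig^T = Sig by rewrite /Sig trmx_mul gT sym.
have ginv : P *m eta *m P^T = invmx g.
  have hPg : P^T *m g = eta *m invmx P by rewrite -hP mulmxK.
  rewrite -[LHS](mulmxK ug) -[P *m eta *m P^T *m g]mulmxA hPg -mulmxA (mulmxA eta) mink_sq mul1mx mulmxV // mul1mx //.
have etaK : forall X : 'M[R]_n.+1, X *m eta *m eta = X.
  by move=> X; rewrite -mulmxA mink_sq mulmx1.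
exists P^T; exists (eta *m P^T *m Sig); split.
- by move=> mu nu; rewrite sum_form trmxK ginv.
- move=> mu nu; rewrite sum_form; congr (_ _ mu nu).
  rewrite [(_ *m Sig)^T]trmx_mul SigT trmx_mul trmxK mink_sym !mulmxA !etaK.
  rewrite -[Sig *m P *m eta]mulmxA -[Sig *m (P *m eta) *m P^T]mulmxA ginv.
  rewrite mulmxKV // /Sig -mulmxA S2 /M mulmxA mulmxV // mul1mx //.
- have hK : forall A B : 'I_n.+1,
      \sum_(mu < n.+1) P^T A mu * (eta *m (eta *m P^T *m Sig)) B mu
      = (P^T *m (eta *m (eta *m P^T *m Sig))^T) A B.
    by move=> A B; rewrite mxE; apply: eq_bigr => k _; congr (_ * _); rewrite [RHS]mxE.
  have E : eta *m (eta *m P^T *m Sig) = P^T *m Sig.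
    by rewrite mulmxA mulmxA mink_sq mul1mx.
  move=> A B; rewrite !hK E [(P^T *m Sig)^T]trmx_mul SigT trmxK.
  have KT : P^T *m (Sig *m P) = (P^T *m (Sig *m P))^T.
    by rewrite [(P^T *m _)^T]trmx_mul trmxK [(Sig *m P)^T]trmx_mul SigT mulmxA.
  by rewrite {1}KT mxE.
Qed.
End P.

Theorem proposition5 (R : realType) (D : nat) (g f : 'M[R]_D) :
  (2 <= D)%N ->
  g^T = g -> f^T = f ->
  g \in unitmx -> f \in unitmx ->
  lorentzian g -> lorentzian f ->
  (forall a : R, a < 0 -> ~~ eigenvalue (invmx g *m f) a) ->
  exists e L : 'M[R]_D,
    [/\ forall mu nu : 'I_D,
          \sum_(A < D) \sum_(B < D) minkowski R D A B * e A mu * e B nu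
            = invmx g mu nu,
        forall mu nu : 'I_D,
          \sum_(A < D) \sum_(B < D) minkowski R D A B * L A mu * L B nu
            = f mu nu
      & forall A B : 'I_D,
          \sum_(mu < D) e A mu * (minkowski R D *m L) B mu
            = \sum_(mu < D) e B mu * (minkowski R D *m L) A mu].
Proof.
move: g f; case: D => [|n] g f hD; first by [].
move=> gT fT ug uf lg _; exact: main.
Qed.
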